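(* Under the hypotheses of Theorem 7.3 (positive integers $a,d,r,h,n$, $r\geq2$, $\gcd(a,d)=\gcd(a,r)=1$, $d>hn(r-1)$, $a_0=a$, $a_{k+1}=ha+r^kd$ for $0\leq k\leq n$, $\{a_0,\dots,a_{n+1}\}$ minimally generating $\mathfrak{S}_{n+2}$), let $\ell_0=0$, let $\ell_i$ ($1\leq i\leq a-1$) be the digit sum of the $r$-adic representation of $i$ up to order $n$, and $L=\max\{\ell_i\mid 1\leq i\leq a-1\}$. Let $M=\mathfrak{S}_{n+2}\setminus\{0\}$ and let $\omega_{s,t}$ be the Apéry table entries defined in the context. Then for $0\leq t\leq a-1$ and $0\leq s\leq L$: $$\omega_{s,t}=\begin{cases}\ell_tha+td & \text{if } 0\leq s\leq\ell_t,\\ \ell_tha+td+(s-\ell_t)a & \text{if } \ell_t<s\leq L.\end{cases}$$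
   Context: The $r$-adic representation of $i$ up to order $n$ is the unique expression $i=\sum_{k=0}^{n}\alpha_kr^k$ with nonnegative integers $\alpha_k$, $0\leq\alpha_k\leq r-1$ for $k\leq n-1$ and $\alpha_n$ unrestricted. For $n\geq1$, $nM=M+\cdots+M$ ($n$ copies). Apéry table entries: $\omega_{0,t}$ is the element of $\mathrm{Ap}(\mathfrak{S}_{n+2},a)$ congruent to $td$ modulo $a$ ($\omega_{0,0}=0$), and for $s\geq1$, $\omega_{s,t}$ is the smallest element of $sM$ congruent to $td$ modulo $a$. *)

(* Defs.v *)
From mathcomp Require Import all_boot.
Set Implicit Arguments. Unset Strict Implicit. Unset Printing Implicit Defensive.

Definition gen (a d r h : nat) (n : nat) (k : 'I_n.+2) : nat :=
  if val k == 0 then a else h * a + r ^ (val k).-1 * d.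

Definition in_span (n : nat) (g : 'I_n.+2 -> nat) (P : pred 'I_n.+2) (x : nat) : Prop :=
  exists c : 'I_n.+2 -> nat, x = \sum_(k < n.+2 | P k) c k * g k.

Arguments gen : clear implicits.

Definition inS (n : nat) (g : 'I_n.+2 -> nat) (x : nat) : Prop := in_span g predT x.

Definition minimally_generating (n : nat) (g : 'I_n.+2 -> nat) : Prop :=
  forall j : 'I_n.+2, ~ in_span g (predC1 j) (g j).

Definition inApery (n : nat) (g : 'I_n.+2 -> nat) (a x : nat) : Prop :=
  inS g x /\ ~ (a <= x /\ inS g (x - a)).

Definition in_sM (n : nat) (g : 'I_n.+2 -> nat) (s x : nat) : Prop :=
  exists f : nat -> nat,
    (forall j, j < s -> inS g (f j) /\ 0 < f j) /\ x = \sum_(j < s) f j.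

Definition is_omega (n : nat) (g : 'I_n.+2 -> nat) (a d s t v : nat) : Prop :=
  if s == 0 then inApery g a v /\ v = t * d %[mod a]
  else [/\ in_sM g s v, v = t * d %[mod a] &
          forall w, in_sM g s w -> w = t * d %[mod a] -> v <= w].

Definition radic_digit_sum (r n i : nat) : nat :=
  \sum_(k < n) (i %/ r ^ k %% r) + i %/ r ^ n.

Definition ell (r n i : nat) : nat := if i == 0 then 0 else radic_digit_sum r n i.

Definition Lmax (a r n : nat) : nat := \max_(1 <= i < a) ell r n i.

(* Main.v *)
Require Import Defs.
From mathcomp Require Import all_boot.
From mathcomp Require Import zify.
Set Implicit Arguments. Unset Strict Implicit. Unset Printing Implicit Defensive.

Lemma inS_add n (g : 'I_n.+2 -> nat) x y : inS g x -> inS g y -> inS g (x + y).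
Proof.
move=> [c ->] [c' ->]; exists (fun k => c k + c' k).
by rewrite -big_split /=; apply: eq_bigr => k _; rewrite mulnDl.
Qed.

Lemma sM_mul n (g : 'I_n.+2 -> nat) k y : inS g y -> 0 < y -> in_sM g k (k * y).
Proof.
move=> Sy y0; exists (fun _ => y); split => //.
by rewrite big_const_ord iter_addn_0 mulnC.
Qed.

Lemma sM_add n (g : 'I_n.+2 -> nat) s s' x y :
  in_sM g s x -> in_sM g s' y -> in_sM g (s + s') (x + y).
Proof.
move=> [f [Hf ->]] [f' [Hf' ->]].
exists (fun j => if j < s then f j else f' (j - s)); split.
  move=> j js; case: ifP => jl; first exact: Hf.
  apply: Hf'; move/negbT: jl; rewrite -leqNgt => jl; lia.
rewrite big_split_ord /=; congr (_ + _); apply: eq_bigr => i _ /=.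
  by rewrite ltn_ord.
by rewrite ltnNge leq_addr /= addKn.
Qed.

Lemma sM_down n (g : 'I_n.+2 -> nat) u x : in_sM g u.+2 x -> in_sM g u.+1 x.
Proof.
move=> [f [Hf ->]].
exists (fun j => if j == u then f u + f u.+1 else f j); split.
  move=> j ju; case: eqP => [_|_]; last by apply: Hf; lia.
  have [S1 P1] := Hf u (leqnSn _).
  have [S2 P2] := Hf u.+1 (ltnSn _).
  split; [exact: inS_add | lia].
rewrite big_ord_recr /= big_ord_recr /= big_ord_recr /= eqxx addnA.
congr (_ + _ + _); apply: eq_bigr => i _; by rewrite /= (ltn_eqF (ltn_ord i)).
Qed.

Lemma sM_le n (g : 'I_n.+2 -> nat) N s x : in_sM g N x -> 0 < s -> s <= N -> in_sM g s x.
Proof.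
elim: N x => [|N IH] x H s0 sN; first by lia.
case: (ltngtP s N.+1) => [sl|sl|->//]; last by lia.
case: N IH H sN sl => [|u] IH H sN sl; first by lia.
apply: IH; [exact: sM_down | by [] | lia].
Qed.

Lemma sum_pos n (g : 'I_n.+2 -> nat) (c : 'I_n.+2 -> nat) :
  0 < \sum_(k < n.+2) c k * g k -> 0 < \sum_(k < n.+2) c k.
Proof.
case: (pickP (fun k => 0 < c k)) => [k ck _| H Hs].
  by rewrite (bigD1 k) //= ltn_addr.
exfalso; move: Hs; rewrite big1 // => k _.
by have := H k; rewrite /= lt0n => /negbFE/eqP ->.
Qed.

Lemma sum_sM n (g : 'I_n.+2 -> nat) (c : 'I_n.+2 -> nat) :
  (forall k, 0 < g k) -> in_sM g (\sum_(k < n.+2) c k) (\sum_(k < n.+2) c k * g k).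
Proof.
move=> gp; apply: (big_ind2 (fun N x => in_sM g N x)).
- by exists (fun _ => 0); split => //; rewrite big_ord0.
- by move=> *; exact: sM_add.
- move=> k _; apply: sM_mul => //.
  exists (fun j => if j == k then 1 else 0).
  rewrite (bigD1 k) //= eqxx mul1n big1 ?addn0 // => j /negbTE ->.
  by rewrite mul0n.
Qed.

Lemma sM_cnt n (g : 'I_n.+2 -> nat) s x : in_sM g s x ->
  exists c : 'I_n.+2 -> nat, x = \sum_(k < n.+2) c k * g k /\ s <= \sum_(k < n.+2) c k.
Proof.
elim: s x => [|s IH] x [f [Hf ->]].
  exists (fun _ => 0); rewrite big_ord0; split => //.
  by rewrite big1 // => k _; rewrite mul0n.
rewrite big_ord_recr /=.
have [c [E C]] : exists c : 'I_n.+2 -> nat, \sum_(j < s) f j = \sum_(k < n.+2) c k * g k /\ s <= \sum_(k < n.+2) c k.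
  apply: IH; exists f; split => // j js; apply: Hf; lia.
have [[c' E'] P] := Hf s (ltnSn s).
have P' : 0 < \sum_(k < n.+2) c' k by apply: (@sum_pos _ g); rewrite -E'.
exists (fun k => c k + c' k); split.
  rewrite E E' -big_split /=; apply: eq_bigr => k _; by rewrite mulnDl.
rewrite big_split /= -addn1; exact: leq_add C P'.
Qed.
Definition Rep (a d r h n m : nat) (b : nat -> nat) :=
  m * a + \sum_(i < n.+1) b i * (h * a + r ^ i * d).

Lemma gen_sum a d r h n (c : 'I_n.+2 -> nat) :
  \sum_(k < n.+2) c k * gen a d r h n k = Rep a d r h n (c ord0) (fun i => c (inord i.+1)).
Proof.
rewrite big_ord_recl /gen /Rep /=; congr (_ + _); apply: eq_bigr => i _.
have -> : lift ord0 i = inord i.+1 by apply: val_inj; rewrite /= inordK // ltnS.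
by rewrite add0n.
Qed.

Lemma gen_cnt n (c : 'I_n.+2 -> nat) :
  \sum_(k < n.+2) c k = c ord0 + \sum_(i < n.+1) c (inord i.+1).
Proof.
rewrite big_ord_recl /=; congr (_ + _); apply: eq_bigr => i _.
by have -> : lift ord0 i = inord i.+1 by apply: val_inj; rewrite /= inordK // ltnS.
Qed.

Lemma rep_gen a d r h n m (b : nat -> nat) : exists c : 'I_n.+2 -> nat,
  \sum_(k < n.+2) c k * gen a d r h n k = Rep a d r h n m b /\
  \sum_(k < n.+2) c k = m + \sum_(i < n.+1) b i.
Proof.
exists (fun k : 'I_n.+2 => if val k == 0 then m else b (val k).-1).
rewrite gen_sum gen_cnt /Rep /=; split; congr (_ + _); apply: eq_bigr => i _;
  (rewrite inordK //; exact: ltn_ord i).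
Qed.

Lemma Rep_exp a d r h n m b : Rep a d r h n m b =
  m * a + (\sum_(i < n.+1) b i) * (h * a) + (\sum_(i < n.+1) b i * r ^ i) * d.
Proof.
rewrite /Rep -addnA; congr (_ + _).
rewrite !big_distrl -big_split /=; apply: eq_bigr => i _; by rewrite mulnDr (mulnA (b i) (r ^ i)).
Qed.

Definition dig r n t k := if k < n then t %/ r ^ k %% r else t %/ r ^ n.

Lemma dig_cnt r n t : \sum_(i < n.+1) dig r n t i = radic_digit_sum r n t.
Proof.
rewrite big_ord_recr /= /dig ltnn /radic_digit_sum; congr (_ + _).
by apply: eq_bigr => i _; rewrite /= ltn_ord.
Qed.

Lemma dig_val r n t : 0 < r -> \sum_(i < n.+1) dig r n t i * r ^ i = t.
Proof.
move=> r0; elim: n => [|n IH].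
  by rewrite big_ord1 /dig /= expn0 divn1 muln1.
move: IH; rewrite big_ord_recr /= big_ord_recr /= [in X in _ -> X]big_ord_recr /=.
rewrite /dig ltnn.
have -> : \sum_(i < n) (if i < n.+1 then (t %/ r ^ i) %% r else t %/ r ^ n.+1) * r ^ i
  = \sum_(i < n) (if i < n then (t %/ r ^ i) %% r else t %/ r ^ n) * r ^ i.
  apply: eq_bigr => i _; by rewrite ltn_ord (leqW (ltn_ord i)).
move=> E; rewrite -[RHS]E -addnA; congr (_ + _).
rewrite ltnSn ltnn expnSr divnMA; set u := t %/ r ^ n.
rewrite {3}(divn_eq u r); lia.
Qed.

Lemma rds_S r n T : 0 < r ->
  radic_digit_sum r n.+1 T = T %% r + radic_digit_sum r n (T %/ r).
Proof.
move=> r0; rewrite /radic_digit_sum big_ord_recl /= expn0 divn1 expnS divnMA -addnA.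
congr (_ + (_ + _)); apply: eq_bigr => i _.
by rewrite /= expnS divnMA.
Qed.

Lemma dig_min r n : 0 < r -> forall (b : nat -> nat) T,
  T = \sum_(i < n.+1) b i * r ^ i -> radic_digit_sum r n T <= \sum_(i < n.+1) b i.
Proof.
move=> r0; elim: n => [|n IH] b T ->.
  by rewrite !big_ord1 /radic_digit_sum big_ord0 expn0 muln1 divn1.
set T' := \sum_(i < n.+1) b i.+1 * r ^ i.
have ET : \sum_(i < n.+2) b i * r ^ i = T' * r + b 0.
  rewrite big_ord_recl /= expn0 muln1 addnC /T' big_distrl /=; congr (_ + _).
  by apply: eq_bigr => i _; rewrite expnS /= /bump leq0n add1n; lia.
rewrite ET rds_S // modnMDl divnMDl //.
set u := b 0 %/ r.
have Z : forall F : nat -> nat, \sum_(i < n.+1) (nat_of_ord i == 0) * F i = F 0.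
  move=> F; rewrite big_ord_recl /= mul1n big1 ?addn0 //.
have S1 : \sum_(i < n.+1) (b i.+1 + (nat_of_ord i == 0) * u) * r ^ i = T' + u.
  rewrite -/T'.
  have -> : \sum_(i < n.+1) (b i.+1 + (nat_of_ord i == 0) * u) * r ^ i
     = \sum_(i < n.+1) (b i.+1 * r ^ i + (nat_of_ord i == 0) * (u * r ^ i)).
    by apply: eq_bigr => i _; rewrite mulnDl mulnA.
  by rewrite big_split /= (Z (fun i => u * r ^ i)) expn0 muln1.
have S2 : \sum_(i < n.+1) (b i.+1 + (nat_of_ord i == 0) * u) = \sum_(i < n.+1) b i.+1 + u.
  by rewrite big_split /= (Z (fun _ => u)).
have H2 := IH (fun k => b k.+1 + (k == 0) * u) (u + T') ltac:(by rewrite S1 addnC).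
rewrite S2 in H2.
rewrite big_ord_recl /=.
have := divn_eq (b 0) r; rewrite -/u => E0.
have : u <= u * r by rewrite leq_pmulr.
have : \sum_(i < n.+1) b (bump 0 i) = \sum_(i < n.+1) b i.+1 by apply: eq_bigr.
rewrite addnC in H2.
move=> ES Hu.
have -> : \sum_(i < n.+1) b (lift ord0 i) = \sum_(i < n.+1) b i.+1 by apply: eq_bigr.
rewrite {2}E0. move: H2. set X := radic_digit_sum _ _ _. set Y := \sum_(i < n.+1) b i.+1.
lia.
Qed.
Lemma LB a d r h n t s m (b : nat -> nat) : 0 < a -> 0 < h -> 2 <= r -> coprime a d ->
  h * n * (r - 1) < d -> t < a -> s <= m + \sum_(i < n.+1) b i ->
  Rep a d r h n m b = t * d %[mod a] ->
  radic_digit_sum r n t * h * a + t * d + (s - radic_digit_sum r n t) * a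
    <= Rep a d r h n m b.
Proof.
move=> a0 h0 r2 cad hd ta hs.
rewrite Rep_exp; set B := \sum_(i < n.+1) b i; set T := \sum_(i < n.+1) b i * r ^ i.
move=> Hmod.
have r0 : 0 < r by lia.
have HT : T %% a = t.
  have E : m * a + B * (h * a) + T * d = (m + B * h) * a + T * d by lia.
  rewrite E modnMDl in Hmod.
  case: (leqP t T) => tT.
    have : a %| T * d - t * d by rewrite -eqn_mod_dvd ?leq_mul2r ?tT ?orbT //; apply/eqP.
    rewrite -mulnBl Gauss_dvdl // -eqn_mod_dvd // => /eqP ->.
    by rewrite modn_small.
  have : a %| t * d - T * d.
    by rewrite -eqn_mod_dvd ?leq_mul2r ?(ltnW tT) ?orbT //; apply/eqP.
  rewrite -mulnBl Gauss_dvdl // => /dvdn_leq; lia.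
have hBT : T <= B * r ^ n.
  rewrite /T /B big_distrl /=; apply: leq_sum => i _.
  by rewrite leq_mul2l (leq_exp2l _ _ r2) -ltnS ltn_ord orbT.
set q := t %/ r ^ n.
set D := \sum_(k < n) (t %/ r ^ k %% r).
have hrds : radic_digit_sum r n t = D + q by [].
set k := n * (r - 1).
have hD : D <= k.
  rewrite /D /k mulnC -iter_addn_0 -big_const_ord; apply: leq_sum => i _.
  have := ltn_pmod (t %/ r ^ i) r0; lia.
have hd' : h * k < d by rewrite /k mulnA.
have hq : q <= B.
  rewrite -(@leq_pmul2r (r ^ n)) ?expn_gt0 ?r0 //.
  apply: leq_trans hBT; apply: leq_trans (leq_divM t (r ^ n)) _.
  have : t <= T by rewrite -HT leq_mod.
  done.
rewrite hrds.
case: h h0 hd hd' Hmod => // h' _ hd hd' Hmod.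
have F8 : s * a <= (m + B) * a by rewrite leq_mul2r hs orbT.
have F9 : q * a <= B * a by rewrite leq_mul2r hq orbT.
have F7 : q * h' * a <= B * h' * a by rewrite leq_mul2r leq_mul2r hq !orbT.
rewrite mulnBl.
case: (ltnP T a) => Ta.
  have Tt : T = t by rewrite -HT modn_small.
  have hB2 : D + q <= B by rewrite -hrds; apply: dig_min => //; rewrite -Tt.
  have F1 : (D + q) * h' * a <= B * h' * a by rewrite leq_mul2r leq_mul2r hB2 !orbT.
  have F3 : (D + q) * a <= B * a by rewrite leq_mul2r hB2 orbT.
  rewrite Tt; lia.
have F4 : (a + t) * d <= T * d.
  rewrite leq_mul2r; apply/orP; right.
  rewrite (divn_eq T a) HT leq_add2r.
  have : 0 < T %/ a by rewrite divn_gt0.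
  by case: (T %/ a) => // x _; rewrite mulSn leq_addr.
have F5 : a * (h'.+1 * k).+1 <= a * d by rewrite leq_mul2l hd' orbT.
have F6 : D * h'.+1 * a <= k * h'.+1 * a by rewrite leq_mul2r leq_mul2r hD !orbT.
lia.
Qed.

Lemma ell_rds r n t : ell r n t = radic_digit_sum r n t.
Proof.
rewrite /ell; case: eqP => // ->.
rewrite /radic_digit_sum div0n addn0 big1 // => i _; by rewrite div0n mod0n.
Qed.

Theorem theorem7p5 (a d r h n : nat) :
  0 < a -> 0 < d -> 0 < h -> 0 < n -> 2 <= r ->
  coprime a d -> coprime a r ->
  h * n * (r - 1) < d ->
  minimally_generating (gen a d r h n) ->
  forall t s, t <= a - 1 -> s <= Lmax a r n ->
    is_omega (gen a d r h n) a d s t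
      (if s <= ell r n t then ell r n t * h * a + t * d
       else ell r n t * h * a + t * d + (s - ell r n t) * a).
Proof.
move=> a0 d0 h0 n0 r2 cad car hd _ t s ta _.
have ta' : t < a by lia.
have r0 : 0 < r by lia.
rewrite ell_rds; set L := radic_digit_sum r n t.
have -> : (if s <= L then L * h * a + t * d else L * h * a + t * d + (s - L) * a)
   = L * h * a + t * d + (s - L) * a.
  case: ifP => sL //; move: sL; rewrite -subn_eq0 => /eqP ->; by rewrite mul0n addn0.
have gpos : forall k, 0 < gen a d r h n k by move=> k; rewrite /gen; case: ifP => _; lia.
have Rv : forall m, Rep a d r h n m (dig r n t) = L * h * a + t * d + m * a.
  move=> m; rewrite Rep_exp dig_cnt dig_val // -/L; lia.
have vmod : L * h * a + t * d + (s - L) * a = t * d %[mod a].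
  have -> : L * h * a + t * d + (s - L) * a = (L * h + (s - L)) * a + t * d by lia.
  by rewrite modnMDl.
rewrite /is_omega; case: eqP => [s0|s0].
  subst s; rewrite sub0n mul0n addn0 in vmod *; split => //; split.
    have [c [E _]] := rep_gen a d r h n 0 (dig r n t).
    by exists c; rewrite E Rv mul0n addn0.
  move=> [av [c Ec]].
  have Ec' : \sum_(k < n.+2) c k * gen a d r h n k = L * h * a + t * d - a by rewrite -Ec.
  rewrite gen_sum in Ec'.
  have := @LB a d r h n t 0 (c ord0) (fun i => c (inord i.+1)) a0 h0 r2 cad hd ta' (leq0n _).
  rewrite Ec' -/L sub0n mul0n addn0.
  have -> : L * h * a + t * d - a = t * d %[mod a].
    rewrite -vmod -{2}(subnK av) -[in RHS]modnDmr modnn addn0 //.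
  move=> /(_ erefl); lia.
split => //.
  have [c [E C]] := rep_gen a d r h n (s - L) (dig r n t).
  have := sum_sM c gpos; rewrite E Rv => H.
  apply: sM_le H _ _; first lia.
  by rewrite C dig_cnt -/L; lia.
move=> w Hw Hwm.
have [c [Ew Cw]] := sM_cnt Hw.
rewrite Ew gen_sum in Hwm *; rewrite gen_cnt in Cw.
exact: LB.
Qed.
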